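(* Danzer's configuration $(35_4)$ is isomorphic to the combinatorial configuration $N(O_4)$ obtained by the $V$-construction from the Odd graph $O_4$.
   Context: Danzer's configuration: take seven 3-dimensional hyperplanes in general position (no five through a common point) in 4-dimensional projective space; they meet by fours in 35 points and by threes in 35 lines, a point being incident with a line iff the triple of hyperplanes defining the line is contained in the quadruple defining the point. Combinatorially: points are the 4-subsets and lines the 3-subsets of $\{1,\dots,7\}$, incidence is containment. The Odd graph $O_4$ is the Kneser graph $K(7,3)$: vertices are the 3-subsets of a 7-element set, adjacent iff disjoint. $V$-construction: for a regular graph $G$ in which no two distinct vertices have the same neighbourhood, $N(G)$ is the incidence structure whose points are the vertices of $G$, whose blocks are the neighbourhoods $N(v)$ of the vertices $v$, with incidence given by membership. Isomorphism of incidence structures means bijections on points and on blocks preserving incidence. *)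

(* Defs.v *)
From mathcomp Require Import all_boot.
Set Implicit Arguments. Unset Strict Implicit. Unset Printing Implicit Defensive.

Record incstr := IncStr {
  ipt : finType;
  iblk : finType;
  inc : ipt -> iblk -> bool }.

Definition isomorphic (S1 S2 : incstr) : Prop :=
  exists (f : ipt S1 -> ipt S2) (g : iblk S1 -> iblk S2),
    [/\ bijective f, bijective g &
        forall p b, inc p b = inc (f p) (g b)].

Definition ksub (k : nat) := {A : {set 'I_7} | #|A| == k}.

Definition Danzer : incstr :=
  @IncStr (ksub 4) (ksub 3) (fun P L => val L \subset val P).

Definition nbhd (V : finType) (adj : rel V) (v : V) : {set V} :=
  [set w | adj v w].

Definition nbhd_blocks (V : finType) (adj : rel V) :=
  {S : {set V} | [exists v, S == nbhd adj v]}.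

Definition Vconstr (V : finType) (adj : rel V) : incstr :=
  @IncStr V (nbhd_blocks adj) (fun p S => p \in val S).

Definition regular_graph (V : finType) (adj : rel V) : Prop :=
  exists k, forall v, #|nbhd adj v| = k.
Definition twin_free (V : finType) (adj : rel V) : Prop :=
  forall v w, nbhd adj v = nbhd adj w -> v = w.

(* Odd graph O_4 = Kneser graph K(7,3): 3-subsets, adjacent iff disjoint. *)
Definition O4_adj : rel (ksub 3) := fun A B => [disjoint val A & val B].

(* Main.v *)
Require Import Defs.
From mathcomp Require Import all_boot.

Lemma cardC3 (A : {set 'I_7}) : #|A| = 3 -> #|~: A| = 4.
Proof. by move=> h; have := cardsC A; rewrite card_ord h => /eqP; rewrite eqn_add2l => /eqP. Qed.

Lemma cardC4 (A : {set 'I_7}) : #|A| = 4 -> #|~: A| = 3.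
Proof. by move=> h; have := cardsC A; rewrite card_ord h => /eqP; rewrite eqn_add2l => /eqP. Qed.

Lemma deg4 (v : ksub 3) : #|nbhd O4_adj v| = 4.
Proof.
rewrite -(card_imset _ val_inj).
have -> : val @: nbhd O4_adj v =
  [set B : {set 'I_7} | B \subset ~: val v & #|B| == 3].
  apply/setP => B; rewrite inE; apply/imsetP/andP.
    case=> b; rewrite inE /O4_adj => hd ->; split; last exact: (valP b).
    by rewrite -disjoints_subset disjoint_sym.
  case=> hs hc; exists (exist _ B hc) => //.
  by rewrite inE /O4_adj /= disjoint_sym disjoints_subset.
by rewrite cards_draws cardC3 //; apply/eqP; exact: (valP v).
Qed.

Lemma twin_sub (v w : ksub 3) : nbhd O4_adj v = nbhd O4_adj w ->
  val v \subset val w.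
Proof.
move=> E; apply/subsetP => x xv; case: (boolP (x \in val w)) => // xw; exfalso.
have cw : #|~: val w| = 4 by apply: cardC3; apply/eqP; exact: (valP w).
have : 0 < #|~: val w :\ x|.
  by move: cw; rewrite (cardsD1 x (~: val w)) inE xw /= add1n => -[->].
case/card_gt0P => y; rewrite !inE => /andP [yx yw].
have cB : #|~: val w :\ y| == 3.
  by move: cw; rewrite (cardsD1 y (~: val w)) inE yw /= add1n => -[->].
pose B : ksub 3 := @exist _ (fun A : {set 'I_7} => #|A| == 3) _ cB.
have : B \in nbhd O4_adj w.
  by rewrite inE /O4_adj /= disjoint_sym disjoints_subset subsetDl.
rewrite -E inE /O4_adj /= => /disjointFr /(_ xv).
by rewrite !inE xw eq_sym yx.
Qed.

Lemma twin : twin_free O4_adj.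
Proof.
move=> v w E; apply: val_inj; apply/eqP; rewrite eqEsubset.
by rewrite (twin_sub _ _ E) (twin_sub _ _ (esym E)).
Qed.

Theorem corollary3p5 :
  regular_graph O4_adj /\ twin_free O4_adj /\
  isomorphic Danzer (Vconstr O4_adj).
Proof.
split; first by exists 4; exact: deg4.
split; first exact: twin.
have f_ok (P : ksub 4) : #|~: val P| == 3.
  by apply/eqP; apply: cardC4; apply/eqP; exact: (valP P).
have f'_ok (L : ksub 3) : #|~: val L| == 4.
  by apply/eqP; apply: cardC3; apply/eqP; exact: (valP L).
have g_ok (L : ksub 3) : [exists v, nbhd O4_adj L == nbhd O4_adj v].
  by apply/existsP; exists L.
pose f (P : ksub 4) : ksub 3 := @exist _ (fun A : {set 'I_7} => #|A| == 3) _ (f_ok P).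
pose f' (L : ksub 3) : ksub 4 := @exist _ (fun A : {set 'I_7} => #|A| == 4) _ (f'_ok L).
pose g (L : ksub 3) : nbhd_blocks O4_adj := @exist _ (fun S : {set ksub 3} => [exists v, S == nbhd O4_adj v]) _ (g_ok L).
pose g' (S : nbhd_blocks O4_adj) : ksub 3 := xchoose (existsP (valP S)).
exists f, g; split.
- exists f'; first by move=> P; apply: val_inj; rewrite /= setCK.
  move=> L; apply: val_inj; by rewrite /= setCK.
- exists g'.
    move=> L; rewrite /g'; move: (xchooseP (existsP (valP (g L)))).
    by move=> /eqP /= E; apply: twin; rewrite -E.
  move=> S; rewrite /g'; move: (xchooseP (existsP (valP S))) => /eqP E.
  by apply: val_inj; rewrite /= -E.
- move=> P L /=.
  rewrite inE /O4_adj /=.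
  by rewrite disjoints_subset setCK.
Qed.
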